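(* For every classical formula $\phi$ of $\mathsf{PT}$, reading $\phi$ as a formula of classical propositional logic with tensor $\otimes$ read as classical disjunction (and $\to$, $\neg$, $\wedge$ read classically), $\phi$ is a classical tautology if and only if $\models\phi$ in team semantics.
   Context: A valuation is a function $v$ from the set Prop of propositional variables to $\{0,1\}$; a team is a set of valuations. Formulas of $\mathsf{PT}$: $\phi::=p\mid\neg p\mid\bot\mid\top\mid\,=\!(p_1,\dots,p_k,q)\mid\phi\wedge\phi\mid\phi\otimes\phi\mid\phi\vee\phi\mid\phi\to\phi$. Satisfaction on a team $X$: $X\models p$ iff $v(p)=1$ for all $v\in X$; $X\models\neg p$ iff $v(p)=0$ for all $v\in X$; $X\models\bot$ iff $X=\emptyset$; $X\models\top$ always; $X\models\,=\!(\vec p,q)$ iff for all $v,v'\in X$, $v(\vec p)=v'(\vec p)$ implies $v(q)=v'(q)$; $\wedge$ conjunction; $X\models\phi\otimes\psi$ iff $X=Y\cup Z$ with $Y\models\phi$, $Z\models\psi$; $X\models\phi\vee\psi$ iff $X\models\phi$ or $X\models\psi$; $X\models\phi\to\psi$ iff every $Y\subseteq X$ with $Y\models\phi$ satisfies $\psi$. $\models\phi$ means all teams satisfy $\phi$. A formula of $\mathsf{PT}$ is classical if it contains no dependence atoms and no intuitionistic disjunction $\vee$. *)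

(* Defs.v *)
From Stdlib Require Import List.
Import ListNotations.

Definition pvar := nat.
Definition valuation := pvar -> bool.
Definition team := valuation -> Prop.

Inductive form : Type :=
| FVar  : pvar -> form
| FNVar : pvar -> form
| FBot  : form
| FTop  : form
| FDep  : list pvar -> pvar -> form
| FAnd  : form -> form -> form
| FTens : form -> form -> form
| FIor  : form -> form -> form
| FImp  : form -> form -> form.

Definition agree_on (ps : list pvar) (v w : valuation) : Prop :=
  forall p, In p ps -> v p = w p.

Fixpoint sat (X : team) (phi : form) : Prop :=
  match phi with
  | FVar p => forall v, X v -> v p = true
  | FNVar p => forall v, X v -> v p = false
  | FBot => forall v, ~ X v
  | FTop => True
  | FDep ps q => forall v w, X v -> X w -> agree_on ps v w -> v q = w q
  | FAnd a b => sat X a /\ sat X b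
  | FTens a b => exists Y Z : team,
      (forall v, X v <-> (Y v \/ Z v)) /\ sat Y a /\ sat Z b
  | FIor a b => sat X a \/ sat X b
  | FImp a b => forall Y : team, (forall v, Y v -> X v) -> sat Y a -> sat Y b
  end.

Definition valid (phi : form) : Prop := forall X : team, sat X phi.

Fixpoint classical (phi : form) : Prop :=
  match phi with
  | FVar _ | FNVar _ | FBot | FTop => True
  | FDep _ _ => False
  | FIor _ _ => False
  | FAnd a b | FTens a b | FImp a b => classical a /\ classical b
  end.

(* Classical reading over a single valuation; ⊗ read as classical disjunction.
   (Values on FDep/FIor are irrelevant: only used on classical formulas.) *)
Fixpoint ceval (v : valuation) (phi : form) : bool :=
  match phi with
  | FVar p => v p
  | FNVar p => negb (v p)
  | FBot => false
  | FTop => true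
  | FDep _ _ => true
  | FAnd a b => ceval v a && ceval v b
  | FTens a b => ceval v a || ceval v b
  | FIor a b => ceval v a || ceval v b
  | FImp a b => implb (ceval v a) (ceval v b)
  end.

Definition tautology (phi : form) : Prop := forall v : valuation, ceval v phi = true.

(* Main.v *)
Require Import Defs.
From Stdlib Require Import Bool.

Lemma flat (phi : form) : classical phi ->
  forall X : team, sat X phi <-> (forall v, X v -> ceval v phi = true).
Proof.
  induction phi as [p|p| | |ps q|a IHa b IHb|a IHa b IHb|a IHa b IHb|a IHa b IHb];
    simpl; intros Hc X.
  - tauto.
  - split; intros H v Hv; specialize (H v Hv);
      destruct (v p); simpl in *; congruence.
  - split; intros H v Hv; [exfalso; exact (H v Hv)| discriminate (H v Hv)].
  - tauto.
  - contradiction.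
  - destruct Hc as [Ha Hb]. rewrite (IHa Ha X), (IHb Hb X).
    split.
    + intros [H1 H2] v Hv. rewrite (H1 v Hv), (H2 v Hv). reflexivity.
    + intros H; split; intros v Hv; specialize (H v Hv);
        apply andb_true_iff in H; tauto.
  - destruct Hc as [Ha Hb]. split.
    + intros [Y [Z [HX [HY HZ]]]] v Hv.
      rewrite (IHa Ha Y) in HY. rewrite (IHb Hb Z) in HZ.
      apply HX in Hv. destruct Hv as [Hv|Hv].
      * rewrite (HY v Hv). reflexivity.
      * rewrite (HZ v Hv). apply orb_true_r.
    + intros H.
      exists (fun v => X v /\ ceval v a = true), (fun v => X v /\ ceval v b = true).
      split; [|split].
      * intros v; split.
        -- intros Hv. pose proof (H v Hv) as E. apply orb_true_iff in E. tauto.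
        -- tauto.
      * rewrite (IHa Ha). intros v [_ E]; exact E.
      * rewrite (IHb Hb). intros v [_ E]; exact E.
  - contradiction.
  - destruct Hc as [Ha Hb]. split.
    + intros H v Hv.
      destruct (ceval v a) eqn:Ea; [|reflexivity]. simpl.
      assert (S : sat (fun w => w = v) b).
      { apply H.
        - intros w ->; exact Hv.
        - rewrite (IHa Ha). intros w ->; exact Ea. }
      rewrite (IHb Hb) in S. apply S; reflexivity.
    + intros H Y HYX HY.
      rewrite (IHa Ha) in HY. rewrite (IHb Hb). intros v Hv.
      specialize (H v (HYX v Hv)). rewrite (HY v Hv) in H. exact H.
Qed.

Theorem lemma2p6 (phi : form) :
  classical phi -> (tautology phi <-> valid phi).
Proof.
  intros Hc. unfold tautology, valid. split.
  - intros T X. rewrite (flat phi Hc X). intros v _; apply T.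
  - intros V v. pose proof (V (fun w => w = v)) as S.
    rewrite (flat phi Hc) in S. apply S; reflexivity.
Qed.
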